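(* Consider the two additive-noise structural causal models $$\mathcal{M}:\ X_1=U_1,\ X_2=X_1+U_2,\ Y=X_1X_2+U_Y, \qquad (U_1,U_2,U_Y)\sim\mathcal{N}(0,\Sigma),\ \Sigma=\begin{bmatrix}1&1&1\\1&1&1\\1&1&1\end{bmatrix},$$ $$\mathcal{M}':\ X_1=U_1,\ X_2=2X_1+U_2,\ Y=X_1X_2+U_Y, \qquad (U_1,U_2,U_Y)\sim\mathcal{N}(0,\Sigma'),\ \Sigma'=\begin{bmatrix}1&0&1\\0&0&0\\1&0&1\end{bmatrix}.$$ Then $\mathcal{M}$ and $\mathcal{M}'$ induce the same observational distribution of $(X_1,X_2,Y)$, the same joint interventional distributions under $\mathrm{do}(X_1=x_1,X_2=x_2)$, and the same interventional distributions under $\mathrm{do}(X_2=x_2)$, but they disagree on the causal effect of intervening on $X_1$ (e.g. on $\mathbb{E}[Y\mid\mathrm{do}(X_1=x_1)]$ for $x_1\neq 0$). Consequently, in additive noise models with zero-mean Gaussian noise and an unrestricted causal graph (in particular, with a causal edge between treatments), single-variable interventional effects are not in general identifiable from observational and joint interventional data.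
   Context: An additive noise model is a structural causal model in which each endogenous variable equals a function of its parents plus an exogenous noise term; here the noise vector is zero-mean multivariate Gaussian with arbitrary (possibly singular) covariance. An intervention $\mathrm{do}(X=x)$ replaces the structural equation of $X$ by the constant $x$. *)

(* Defs.v *)
From HB Require Import structures.
From mathcomp Require Import all_boot all_order all_algebra.
From mathcomp Require Import all_classical all_reals all_analysis.
Set Implicit Arguments. Unset Strict Implicit. Unset Printing Implicit Defensive.
Import Order.TTheory GRing.Theory Num.Theory.
Local Open Scope classical_set_scope.
Local Open Scope ring_scope.

Definition iU1 : 'I_3 := @Ordinal 3 0 isT.
Definition iU2 : 'I_3 := @Ordinal 3 1 isT.
Definition iUY : 'I_3 := @Ordinal 3 2 isT.

Definition gauss_law {R : realType} (v : R) : set R -> \bar R :=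
  if v == 0 then (fun A => \d_(0 : R) A) else normal_prob 0 (Num.sqrt v).

(* U : T -> 'rV_3 is a zero-mean Gaussian random vector with covariance
   matrix Sigma (possibly singular): each component is measurable and every
   linear combination t . U is N(0, t Sigma t^T) (Cramer-Wold definition). *)
Definition gaussian_vector {d} {T : measurableType d} {R : realType}
  (P : probability T R) (U : T -> 'rV[R]_3) (Sigma : 'M[R]_3) : Prop :=
  (forall i, measurable_fun setT (fun w => U w 0 i)) /\
  forall (t : 'rV[R]_3) (A : set R), measurable A ->
    P [set w | (U w *m t^T) 0 0 \in A] = gauss_law ((t *m Sigma *m t^T) 0 0) A.

(* Solution of the additive noise SCM
     X1 = U1,  X2 = f2 X1 + U2,  Y = fY X1 X2 + UY
   under the (possibly empty) intervention given by i1, i2 :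
   [Some x] replaces the structural equation by the constant x. *)
Definition anm_sol {R : realType} (f2 : R -> R) (fY : R -> R -> R)
  (i1 i2 : option R) (u : 'rV[R]_3) : (R * R * R)%type :=
  let x1 := if i1 is Some x then x else u 0 iU1 in
  let x2 := if i2 is Some x then x else f2 x1 + u 0 iU2 in
  (x1, x2, fY x1 x2 + u 0 iUY).

Definition anm_law {d} {T : measurableType d} {R : realType}
  (P : probability T R) (U : T -> 'rV[R]_3) (f2 : R -> R) (fY : R -> R -> R)
  (i1 i2 : option R) (A : set (R * R * R)) : \bar R :=
  P ((fun w => anm_sol f2 fY i1 i2 (U w)) @^-1` A).

Definition anm_EY {d} {T : measurableType d} {R : realType}
  (P : probability T R) (U : T -> 'rV[R]_3) (f2 : R -> R) (fY : R -> R -> R)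
  (i1 i2 : option R) : \bar R :=
  'E_P[fun w => (anm_sol f2 fY i1 i2 (U w)).2].

Definition f2M {R : realType} (x : R) : R := x.
Definition f2M' {R : realType} (x : R) : R := 2 * x.
Definition fYM {R : realType} (x1 x2 : R) : R := x1 * x2.

Definition SigmaM {R : realType} : 'M[R]_3 := const_mx 1.
Definition SigmaM' {R : realType} : 'M[R]_3 :=
  \matrix_(i, j) (if (i != iU2) && (j != iU2) then 1 else 0).

(* Main.v *)
Require Import Defs.
From HB Require Import structures.
From mathcomp Require Import all_boot all_order all_algebra.
From mathcomp Require Import all_classical all_reals all_analysis.
From mathcomp Require Import ring lra measurable_realfun normal_distribution.
Import Order.TTheory GRing.Theory Num.Theory.
Local Open Scope classical_set_scope.
Local Open Scope ring_scope.


Definition rv3 {R : realType} (a b c : R) : 'rV[R]_3 :=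
  \row_(j < 3) (if j == iU1 then a else if j == iU2 then b else c).

Lemma dot3 (R : realType) (u : 'rV[R]_3) a b c :
  (u *m (rv3 a b c)^T) 0 0 = u 0 iU1 * a + u 0 iU2 * b + u 0 iUY * c.
Proof.
rewrite mxE !big_ord_recr big_ord0 /= !mxE /= add0r.
have -> : widen_ord (leqnSn 2) (widen_ord (leqnSn 1) ord_max) = iU1 by apply/val_inj.
have -> : widen_ord (leqnSn 2) ord_max = iU2 by apply/val_inj.
have -> : (ord_max : 'I_3) = iUY by apply/val_inj.
by [].
Qed.

Lemma quadM (R : realType) a b c :
  ((rv3 a b c) *m SigmaM *m (rv3 a b c)^T) 0 0 = (a + b + c) ^+ 2 :> R.
Proof.
rewrite dot3 !mxE !big_ord_recr !big_ord0 /= !mxE /=.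
rewrite /SigmaM ?mxE /=. lra.
Qed.

Lemma quadM' (R : realType) a b c :
  ((rv3 a b c) *m SigmaM' *m (rv3 a b c)^T) 0 0 = (a + c) ^+ 2 :> R.
Proof.
rewrite dot3 !mxE !big_ord_recr !big_ord0 /= !mxE /=.
rewrite /SigmaM' ?mxE /=. lra.
Qed.

Lemma normal_pdfE' (R : realType) (s x : R) : s != 0 ->
  normal_pdf 0 s x = normal_peak s * normal_fun 0 s x.
Proof. by move=> s0; rewrite /normal_pdf /= (negbTE s0). Qed.

Lemma sqrt2_neq0 (R : realType) : Num.sqrt 2 != 0 :> R.
Proof. by rewrite gt_eqF // sqrtr_gt0; lra. Qed.

Lemma normal_abs_bound (R : realType) (x : R) :
  `|x| * normal_pdf 0 1 x <=
  (normal_peak 1 / normal_peak (Num.sqrt 2)) * normal_pdf 0 (Num.sqrt 2) x.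
Proof.
rewrite !normal_pdfE' ?sqrt2_neq0 ?oner_eq0 //.

have ps : 0 < normal_peak (Num.sqrt 2 : R) by apply: normal_peak_gt0; exact: sqrt2_neq0.

rewrite mulrA divfK ?gt_eqF // mulrCA ler_wpM2l ?normal_peak_ge0 //.
rewrite /normal_fun !subr0 expr1n.
have -> : Num.sqrt (2:R) ^+ 2 = 2 by rewrite sqr_sqrtr // ler0n.

have h1 : `|x| <= expR (x ^+ 2 / 4).
  apply: le_trans (expR_ge1Dx _).
  have := sqr_ge0 (`|x| - 2); rewrite -[x ^+ 2]real_normK ?num_real //.
  rewrite sqrrB; rewrite -mulr_natr expr2.
  lra.
apply: le_trans (ler_wpM2r (expR_ge0 _) h1) _.
rewrite -expRD ler_expR. rewrite -mulr_natr. lra.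
Qed.

Lemma normal_abs_int (R : realType) :
  (\int[normal_prob (0:R) 1]_x (`|x|%:E) < +oo)%E.
Proof.
have numu := normal_prob_dominates (0:R) 1.
rewrite -(Radon_Nikodym_SigmaFinite.change_of_variables numu) //; last first.
  by apply/measurable_EFinP; exact: normr_measurable.
set g := Radon_Nikodym_SigmaFinite.f _ _.
have mg : measurable_fun setT g.
  exact: measurable_int (Radon_Nikodym_SigmaFinite.f_integrable numu).
have mphi : measurable_fun setT (fun x : R => (normal_pdf 0 1 x)%:E).
  by apply/measurable_EFinP; exact: measurable_normal_pdf.
have ae : ae_eq lebesgue_measure setT g (fun x => (normal_pdf 0 1 x)%:E).
  apply: integral_ae_eq => //.
    exact: Radon_Nikodym_SigmaFinite.f_integrable.
  move=> E _ mE.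
  by rewrite -(Radon_Nikodym_SigmaFinite.f_integral numu mE).
rewrite (_ : (\int[lebesgue_measure]_x (`|x|%:E * g x) = \int[lebesgue_measure]_x (`|x|%:E * (normal_pdf 0 1 x)%:E))%E); last first.
  apply: ae_eq_integral => //; last exact: ae_eqe_mul2l.
  - apply: emeasurable_funM => //.
    by apply/measurable_EFinP; exact: normr_measurable.
  - apply: emeasurable_funM => //.
    by apply/measurable_EFinP; exact: normr_measurable.
apply: (@le_lt_trans _ _ (\int[lebesgue_measure]_x
   ((normal_peak (1:R) / normal_peak (Num.sqrt 2))%:E * (normal_pdf 0 (Num.sqrt 2) x)%:E))%E).
  apply: ge0_le_integral => //.
  - by move=> x _; rewrite -EFinM lee_fin mulr_ge0 ?normal_pdf_ge0.
  - apply: emeasurable_funM => //.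
    by apply/measurable_EFinP; exact: normr_measurable.
  - apply: emeasurable_funM => //.
    by apply/measurable_EFinP; exact: measurable_normal_pdf.
  - by move=> x _; rewrite -EFinM lee_fin normal_abs_bound.
rewrite ge0_integralZl //; last first.
  - by rewrite lee_fin divr_ge0 ?normal_peak_ge0.
  - by move=> x _; rewrite lee_fin normal_pdf_ge0.
  - by apply/measurable_EFinP; exact: measurable_normal_pdf.
by rewrite integral_normal_pdf mule1 ltry.
Qed.

Lemma Zmean d (T : measurableType d) (R : realType) (P : probability T R)
  (Z : T -> R) (mZ : measurable_fun setT Z)
  (hZ : forall B : set R, measurable B -> P (Z @^-1` B) = normal_prob 0 1 B)
  (hZ' : forall B : set R, measurable B ->
     P ((fun w => - Z w) @^-1` B) = normal_prob 0 1 B) :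
  P.-integrable setT (EFin \o Z) /\ (\int[P]_w (Z w)%:E = 0)%E.
Proof.
have mNZ : measurable_fun setT (fun w => - Z w) by exact: measurable_funN.
have iZ : P.-integrable setT (EFin \o Z).
  apply/integrableP; split; first exact/measurable_EFinP.
  apply: le_lt_trans (normal_abs_int R); rewrite le_eqVlt; apply/orP; left; apply/eqP.
  have mZ' : measurable_fun setT (Z : T -> measurableTypeR R) by exact: mZ.
  transitivity (\int[@pushforward _ _ _ (measurableTypeR R) _ P Z]_x `|x|%:E)%E.
    rewrite (@ge0_integral_pushforward _ _ T (measurableTypeR R) R Z mZ' P setT (fun x => `|x|%:E)%E) //.
    by apply/measurable_EFinP; exact: normr_measurable.
  by apply: eq_measure_integral => A mA _; exact: hZ.
split => //.
have iNZ : P.-integrable setT (EFin \o (fun w => - Z w)).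
  by have := integrableN iZ; apply: eq_integrable => // w _.
have mZ' : measurable_fun setT (Z : T -> measurableTypeR R) by exact: mZ.
have mNZ' : measurable_fun setT ((fun w => - Z w) : T -> measurableTypeR R) by exact: mNZ.
have mE : measurable_fun (setT : set (measurableTypeR R)) EFin by exact: EFin_measurable.
have e1 : (\int[@pushforward _ _ _ (measurableTypeR R) _ P Z]_x x%:E = \int[P]_w (Z w)%:E)%E.
  by rewrite (@integral_pushforward _ _ T (measurableTypeR R) R Z mZ' P setT EFin mE iZ measurableT).
have e2 : (\int[@pushforward _ _ _ (measurableTypeR R) _ P (fun w => (- Z w)%R)]_x x%:E
     = \int[P]_w (- Z w)%R%:E)%E.
  by rewrite (@integral_pushforward _ _ T (measurableTypeR R) R _ mNZ' P setT EFin mE iNZ measurableT).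
have e3 : (\int[@pushforward _ _ _ (measurableTypeR R) _ P Z]_x x%:E =
    \int[@pushforward _ _ _ (measurableTypeR R) _ P (fun w => (- Z w)%R)]_x x%:E)%E.
  apply: eq_measure_integral => A mA _.
  first [exact: (etrans (hZ A mA) (esym (hZ' A mA))) | exact: (etrans (hZ' A mA) (esym (hZ A mA)))].
have e4 : (\int[P]_w (- Z w)%R%:E = - \int[P]_w (Z w)%:E)%E.
  transitivity ((-1)%:E * \int[P]_w (EFin \o Z) w)%E; last by rewrite mulN1e.
  rewrite -(integralZl _ iZ (-1)) //.
  by apply: eq_integral => w _; rewrite /= -EFinM mulN1r.
rewrite e1 e2 e4 in e3.
have := integrable_fin_num _ iZ.
move: e3; case: (\int[P]_w (Z w)%:E)%E => // r.
by move/eqP; rewrite eqe => /eqP h _; congr (_%:E); lra.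
Qed.



Definition lin {d} {T : measurableType d} {R : realType} (U : T -> 'rV[R]_3)
  (a b c : R) (w : T) : R := U w 0 iU1 * a + U w 0 iU2 * b + U w 0 iUY * c.

Lemma measurable_lin d (T : measurableType d) (R : realType) (U : T -> 'rV[R]_3)
  (mU : forall i, measurable_fun setT (fun w => U w 0 i)) a b c :
  measurable_fun setT (lin U a b c).
Proof.
rewrite /lin; apply: measurable_funD; first apply: measurable_funD.
- by apply: measurable_funM => //.
- by apply: measurable_funM => //.
- by apply: measurable_funM => //.
Qed.

Lemma gv_lin {d} {T : measurableType d} {R : realType} (P : probability T R)
  (U : T -> 'rV[R]_3) (Sigma : 'M[R]_3) (hU : gaussian_vector P U Sigma)
  a b c (B : set R) : measurable B ->
  P (lin U a b c @^-1` B) =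
  gauss_law ((rv3 a b c *m Sigma *m (rv3 a b c)^T) 0 0) B.
Proof.
move=> mB; rewrite -(hU.2 _ _ mB); congr (P _).
by apply/seteqP; split => w /=; rewrite in_setE dot3.
Qed.

Lemma gauss_law0 (R : realType) (A : set R) : gauss_law 0 A = \d_(0:R) A.
Proof. by rewrite /gauss_law eqxx. Qed.

Lemma gauss_law1 (R : realType) (A : set R) : gauss_law 1 A = normal_prob 0 1 A.
Proof. by rewrite /gauss_law oner_eq0 sqrtr1. Qed.

Lemma gv_null d (T : measurableType d) (R : realType) (P : probability T R)
  (U : T -> 'rV[R]_3) (Sigma : 'M[R]_3) (hU : gaussian_vector P U Sigma) a b c :
  (rv3 a b c *m Sigma *m (rv3 a b c)^T) 0 0 = 0 ->
  P (lin U a b c @^-1` [set~ 0]) = 0.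
Proof.
move=> q0; rewrite (gv_lin _ _ _ hU) //; last first. apply: measurableC. exact: measurable_set1.
rewrite q0 gauss_law0 diracE.
have -> : ((0:R) \in [set~ 0]) = false by apply/negbTE; rewrite notin_setE /=.
by [].
Qed.

Lemma eq_off_null d (T : measurableType d) (R : realType) (P : probability T R)
  (S S' N : set T) : measurable S -> measurable S' -> measurable N ->
  P N = 0 -> S `\` N = S' `\` N -> P S = P S'.
Proof.
move=> mS mS' mN PN e.
rewrite (measureDI P mS mN) (measureDI P mS' mN) e.
rewrite (subset_measure0 _ mN (@subIsetr _ S N) PN) ?(subset_measure0 _ mN (@subIsetr _ S' N) PN) //.
- exact: measurableI.
- exact: measurableI.
Qed.

Lemma null2 d (T : measurableType d) (R : realType) (P : probability T R)
  (N1 N2 : set T) : measurable N1 -> measurable N2 -> P N1 = 0 -> P N2 = 0 ->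
  P (N1 `|` N2) = 0.
Proof.
move=> m1 m2 p1 p2; apply/eqP; rewrite eq_le measure_ge0 andbT.
have q1 : (P N1 <= 0)%E by rewrite p1.
have q2 : (P N2 <= 0)%E by rewrite p2.
apply: le_trans (measureU2 P m1 m2) _.
by rewrite -[0%E]adde0; exact: leeD.
Qed.

Lemma measurable_preimage d (T : measurableType d) d' (X : measurableType d')
  (f : T -> X) (A : set X) : measurable_fun setT f -> measurable A ->
  measurable (f @^-1` A).
Proof. by move=> mf mA; rewrite -[_ @^-1` _]setTI; exact: mf. Qed.

Lemma law_via d (T : measurableType d) (R : realType) (P : probability T R)
  (U : T -> 'rV[R]_3) (Sigma : 'M[R]_3) (hU : gaussian_vector P U Sigma)
  a b c dX (X : measurableType dX) (h : R -> X) (mh : measurable_fun setT h)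
  (f : T -> X) (mf : measurable_fun setT f) (N : set T) (mN : measurable N)
  (PN : P N = 0) (agree : forall w, ~ N w -> f w = h (lin U a b c w))
  (A : set X) : measurable A ->
  P (f @^-1` A) = gauss_law ((rv3 a b c *m Sigma *m (rv3 a b c)^T) 0 0) (h @^-1` A).
Proof.
move=> mA.
have ml := @measurable_lin _ _ _ U hU.1 a b c.
rewrite -(gv_lin _ _ _ hU) //; last exact: measurable_preimage.
apply: (@eq_off_null _ _ _ P _ _ N) => //.
- exact: measurable_preimage.
- by apply: measurable_preimage => //; exact: measurable_preimage.
- apply/seteqP; split => w [Aw Nw]; split => //=.
  + by rewrite -agree.
  + by move: Aw => /=; rewrite agree.
Qed.



Lemma EY_via d (T : measurableType d) (R : realType) (P : probability T R)
  (U : T -> 'rV[R]_3) (Sigma : 'M[R]_3) (hU : gaussian_vector P U Sigma)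
  (q1 : (rv3 1 0 0 *m Sigma *m (rv3 1 0 0)^T) 0 0 = 1)
  (q2 : (rv3 (-1) 0 0 *m Sigma *m (rv3 (-1) 0 0)^T) 0 0 = 1)
  (Y : T -> R) (mY : measurable_fun setT Y) (N : set T) (mN : measurable N)
  (PN : P N = 0) (c0 k : R)
  (agree : forall w, ~ N w -> Y w = c0 + k * lin U 1 0 0 w) :
  (\int[P]_w (Y w)%:E = c0%:E)%E.
Proof.
set Z := lin U 1 0 0.
have mZ : measurable_fun setT Z := @measurable_lin _ _ _ U hU.1 1 0 0.
have [iZ Z0] : P.-integrable setT (EFin \o Z) /\ (\int[P]_w (Z w)%:E = 0)%E.
  apply: Zmean => // B mB.
    by rewrite (gv_lin _ _ _ hU) // q1 gauss_law1.
  have -> : (fun w => - Z w) = lin U (-1) 0 0.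
    by apply/funext => w; rewrite /Z /lin !mulr0 !addr0 mulr1 mulrN1.
  by rewrite (gv_lin _ _ _ hU) // q2 gauss_law1.
have ae : ae_eq P setT (fun w => (Y w)%:E) (fun w => (c0 + k * Z w)%:E).
  exists N; split => // w /= nw; apply: contrapT => Nw; apply: nw => _.
  by rewrite agree.
rewrite (ae_eq_integral (fun w => (c0 + k * Z w)%:E)) //; last first.
- apply/measurable_EFinP; apply: measurable_funD => //.
  exact: measurable_funM.
- exact/measurable_EFinP.
under eq_integral do rewrite EFinD EFinM.
rewrite integralD //; last first.
- exact: integrableZl.
- exact: finite_measure_integrable_cst.
rewrite integralZl // Z0 mule0 adde0 integral_cst //.
transitivity (c0%:E * 1)%E; last exact: mule1.
by congr (_ * _)%E; exact: probability_setT.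
Qed.



Lemma offnull {d} {T : measurableType d} {R : realType} {U : T -> 'rV[R]_3} {a b c w} :
  ~ (lin U a b c @^-1` [set~ 0]) w -> lin U a b c w = 0.
Proof. by move=> h; apply: contrapT. Qed.

Ltac mes hU := repeat first [ exact: measurable_cst | exact: measurable_id
  | exact: (hU.1 _) | apply: measurable_funD | apply: measurable_funM
  | apply: measurable_fun_pair ].

Theorem mainTheorem4 (R : realType)
  (d : measure_display) (T : measurableType d) (P : probability T R)
  (U : T -> 'rV[R]_3)
  (d' : measure_display) (T' : measurableType d') (P' : probability T' R)
  (U' : T' -> 'rV[R]_3) :
  gaussian_vector P U SigmaM ->
  gaussian_vector P' U' SigmaM' ->
  (* same observational distribution *)
  (forall A : set (R * R * R), measurable A ->
     anm_law P U f2M fYM None None A = anm_law P' U' f2M' fYM None None A) /\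
  (* same joint interventional distributions under do(X1 = x1, X2 = x2) *)
  (forall (x1 x2 : R) (A : set (R * R * R)), measurable A ->
     anm_law P U f2M fYM (Some x1) (Some x2) A
     = anm_law P' U' f2M' fYM (Some x1) (Some x2) A) /\
  (* same interventional distributions under do(X2 = x2) *)
  (forall (x2 : R) (A : set (R * R * R)), measurable A ->
     anm_law P U f2M fYM None (Some x2) A
     = anm_law P' U' f2M' fYM None (Some x2) A) /\
  (* different causal effect of intervening on X1 *)
  (forall x1 : R, x1 != 0 ->
     anm_EY P U f2M fYM (Some x1) None <> anm_EY P' U' f2M' fYM (Some x1) None).
Proof.
move=> hU hU'.
pose N := (lin U 1 (-1) 0 @^-1` [set~ 0]) `|` (lin U 1 0 (-1) @^-1` [set~ 0]).
pose N' := (lin U' 0 1 0 @^-1` [set~ 0]) `|` (lin U' 1 0 (-1) @^-1` [set~ 0]).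
have mC : measurable ([set~ 0] : set R) by apply: measurableC; exact: measurable_set1.
have mN : measurable N.
  by apply: measurableU; apply: measurable_preimage => //; exact: (@measurable_lin _ _ _ U hU.1).
have mN' : measurable N'.
  by apply: measurableU; apply: measurable_preimage => //; exact: (@measurable_lin _ _ _ U' hU'.1).
have PN : P N = 0.
  by apply: null2; try (apply: measurable_preimage => //; exact: (@measurable_lin _ _ _ U hU.1));
    apply: (@gv_null _ _ _ P U _ hU); rewrite quadM; lra.
have PN' : P' N' = 0.
  by apply: null2; try (apply: measurable_preimage => //; exact: (@measurable_lin _ _ _ U' hU'.1));
    apply: (@gv_null _ _ _ P' U' _ hU'); rewrite quadM'; lra.
have offN w : ~ N w -> U w 0 iU2 = U w 0 iU1 /\ U w 0 iUY = U w 0 iU1.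
  move=> nN; have h1 := offnull (fun H => nN (or_introl H)).
  have h2 := offnull (fun H => nN (or_intror H)).
  by move: h1 h2; rewrite /lin => h1 h2; split; lra.
have offN' w : ~ N' w -> U' w 0 iU2 = 0 /\ U' w 0 iUY = U' w 0 iU1.
  move=> nN; have h1 := offnull (fun H => nN (or_introl H)).
  have h2 := offnull (fun H => nN (or_intror H)).
  by move: h1 h2; rewrite /lin => h1 h2; split; lra.
have q : forall S : 'M[R]_3, S = SigmaM \/ S = SigmaM' -> (rv3 1 0 0 *m S *m (rv3 1 0 0)^T) 0 0 = 1.
  by move=> S [->|->]; rewrite ?quadM ?quadM'; lra.
split.
  move=> A mA.
  pose h := fun u : R => (u, 2 * u, u * (2 * u) + u).
  have mh : measurable_fun setT h by rewrite /h; mes hU.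
  rewrite /anm_law.
  rewrite (@law_via _ _ _ P U _ hU 1 0 0 _ _ h mh _ _ N mN PN) //; first last.
  - move=> w /offN [e2 e3]. rewrite /anm_sol /lin /f2M /fYM /h e2 e3 /=. by congr (_, _, _); ring.
  - by rewrite /anm_sol /f2M /fYM /=; mes hU.
  rewrite (@law_via _ _ _ P' U' _ hU' 1 0 0 _ _ h mh (fun w => anm_sol f2M' fYM None None (U' w)) _ N' mN' PN'); last exact: mA.
  - by rewrite (q SigmaM) ?(q SigmaM'); [|right|left].
  - by rewrite /anm_sol /f2M' /fYM /=; mes hU'.
  - move=> w /offN' [e2 e3]. rewrite /anm_sol /lin /f2M' /fYM /h e2 e3 /=. by congr (_, _, _); ring.
split.
  move=> x1 x2 A mA; rewrite /anm_law.
  pose h := fun u : R => (x1, x2, x1 * x2 + u).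
  have mh : measurable_fun setT h by rewrite /h; mes hU.
  have m0 : measurable (set0 : set T) := measurable0.
  have m0' : measurable (set0 : set T') := measurable0.
  rewrite (@law_via _ _ _ P U _ hU 0 0 1 _ _ h mh (fun w => anm_sol f2M fYM (Some x1) (Some x2) (U w)) _ set0 m0 (measure0 _)); last exact: mA.
  - rewrite (@law_via _ _ _ P' U' _ hU' 0 0 1 _ _ h mh (fun w => anm_sol f2M' fYM (Some x1) (Some x2) (U' w)) _ set0 m0' (measure0 _)); last exact: mA.
    + by rewrite quadM quadM' !add0r.
    + by rewrite /anm_sol /f2M' /fYM /=; mes hU'.
    + move=> w _; rewrite /anm_sol /lin /fYM /h /=. by congr (_, _, _); ring.
  - by rewrite /anm_sol /f2M /fYM /=; mes hU.
  - move=> w _; rewrite /anm_sol /lin /fYM /h /=. by congr (_, _, _); ring.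
split.
  move=> x2 A mA; rewrite /anm_law.
  pose h := fun u : R => (u, x2, u * x2 + u).
  have mh : measurable_fun setT h by rewrite /h; mes hU.
  rewrite (@law_via _ _ _ P U _ hU 1 0 0 _ _ h mh (fun w => anm_sol f2M fYM None (Some x2) (U w)) _ N mN PN); last exact: mA.
  - rewrite (@law_via _ _ _ P' U' _ hU' 1 0 0 _ _ h mh (fun w => anm_sol f2M' fYM None (Some x2) (U' w)) _ N' mN' PN'); last exact: mA.
    + by rewrite (q SigmaM) ?(q SigmaM'); [|right|left].
    + by rewrite /anm_sol /f2M' /fYM /=; mes hU'.
    + move=> w /offN' [e2 e3]; rewrite /anm_sol /lin /fYM /h e3 /=. by congr (_, _, _); ring.
  - by rewrite /anm_sol /f2M /fYM /=; mes hU.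
  - move=> w /offN [e2 e3]; rewrite /anm_sol /lin /fYM /h e3 /=. by congr (_, _, _); ring.
move=> x1 x10; rewrite /anm_EY unlock.
have q2 : forall S : 'M[R]_3, S = SigmaM \/ S = SigmaM' -> (rv3 (-1) 0 0 *m S *m (rv3 (-1) 0 0)^T) 0 0 = 1.
  by move=> S [->|->]; rewrite ?quadM ?quadM'; lra.
rewrite (@EY_via _ _ _ P U _ hU (q SigmaM (or_introl erefl)) (q2 SigmaM (or_introl erefl))
  (fun w => (anm_sol f2M fYM (Some x1) None (U w)).2) _ N mN PN (x1 ^+ 2) (x1 + 1)).
- rewrite (@EY_via _ _ _ P' U' _ hU' (q SigmaM' (or_intror erefl)) (q2 SigmaM' (or_intror erefl))
    (fun w => (anm_sol f2M' fYM (Some x1) None (U' w)).2) _ N' mN' PN' (2 * x1 ^+ 2) 1).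
  + move=> e; have hh : x1 ^+ 2 = 2 * x1 ^+ 2 by case: e.
    have : x1 ^+ 2 = 0 by lra.
    by move/eqP; rewrite sqrf_eq0 (negbTE x10).
  + by rewrite /anm_sol /f2M' /fYM /=; mes hU'.
  + move=> w /offN' [e2 e3]; rewrite /anm_sol /lin /f2M' /fYM e2 e3 /=. ring.
- by rewrite /anm_sol /f2M /fYM /=; mes hU.
- move=> w /offN [e2 e3]; rewrite /anm_sol /lin /f2M /fYM e2 e3 /=. ring.
Qed.
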